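(* Let $R$ be a separative exchange ring in which $2$ is invertible, and let $a\in R$ be such that $a-a^3$ is regular. If $(a-a^3)R\propto r(a)$ and $(a-a^3)R\propto R/aR$, then $a$ is unit-regular.
   Context: All rings are associative with identity; modules are right modules. An element $x\in R$ is regular if $x=xyx$ for some $y\in R$, and unit-regular if $x=xux$ for some unit $u\in R$. $R$ is an exchange ring if for every $x\in R$ there is an idempotent $e\in xR$ with $1-e\in(1-x)R$. $R$ is separative if for all finitely generated projective right $R$-modules $A,B$: $A\oplus A\cong A\oplus B\cong B\oplus B$ implies $A\cong B$. $r(a)=\{x\in R: ax=0\}$. For right modules $A,B$, $A\propto B$ means that $A$ is isomorphic to a direct summand of $B^{\oplus m}$ (direct sum of $m$ copies of $B$) for some positive integer $m$. *)

(* Defs.v *)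
From HB Require Import structures.
From mathcomp Require Import all_boot all_algebra.
Set Implicit Arguments. Unset Strict Implicit. Unset Printing Implicit Defensive.
Import GRing.Theory.
Local Open Scope ring_scope.

(* A right R-module: carrier with an equivalence relation (its equality),
   compatible operations, and the module axioms holding up to that equality. *)
Record rmod (R : pzRingType) := RMod {
  mcar :> Type;
  meq : mcar -> mcar -> Prop;
  mzero : mcar;
  madd : mcar -> mcar -> mcar;
  mopp : mcar -> mcar;
  mact : mcar -> R -> mcar;
  meq_refl : forall x, meq x x;
  meq_sym : forall x y, meq x y -> meq y x;
  meq_trans : forall x y z, meq x y -> meq y z -> meq x z;
  madd_compat : forall x x' y y', meq x x' -> meq y y' -> meq (madd x y) (madd x' y');
  mopp_compat : forall x x', meq x x' -> meq (mopp x) (mopp x');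
  mact_compat : forall x x' r, meq x x' -> meq (mact x r) (mact x' r);
  maddA : forall x y z, meq (madd x (madd y z)) (madd (madd x y) z);
  maddC : forall x y, meq (madd x y) (madd y x);
  madd0 : forall x, meq (madd x mzero) x;
  maddN : forall x, meq (madd x (mopp x)) mzero;
  mactDl : forall x y r, meq (mact (madd x y) r) (madd (mact x r) (mact y r));
  mactDr : forall x r s, meq (mact x (r + s)) (madd (mact x r) (mact x s));
  mactM : forall x r s, meq (mact x (r * s)) (mact (mact x r) s);
  mact1 : forall x, meq (mact x 1) x }.

Arguments meq {R M} : rename.
Arguments mzero {R M} : rename.
Arguments madd {R M} : rename.
Arguments mopp {R M} : rename.
Arguments mact {R M} : rename.

Definition is_hom (R : pzRingType) (A B : rmod R) (f : A -> B) : Prop :=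
  [/\ (forall x y, meq x y -> meq (f x) (f y)),
      (forall x y, meq (f (madd x y)) (madd (f x) (f y))) &
      (forall x r, meq (f (mact x r)) (mact (f x) r))].

Definition miso (R : pzRingType) (A B : rmod R) : Prop :=
  exists (f : A -> B) (g : B -> A),
    [/\ is_hom f, is_hom g, (forall x, meq (g (f x)) x) & (forall y, meq (f (g y)) y)].

Definition dsum (R : pzRingType) (A B : rmod R) : rmod R.
Proof.
refine (@RMod R (A * B)%type
  (fun p q => meq p.1 q.1 /\ meq p.2 q.2)
  (mzero, mzero)
  (fun p q => (madd p.1 q.1, madd p.2 q.2))
  (fun p => (mopp p.1, mopp p.2))
  (fun p r => (mact p.1 r, mact p.2 r)) _ _ _ _ _ _ _ _ _ _ _ _ _ _).
- by move=> x; split; apply: meq_refl.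
- by move=> x y [? ?]; split; apply: meq_sym.
- by move=> x y z [? ?] [? ?]; split; apply: meq_trans; eauto.
- by move=> x x' y y' [? ?] [? ?]; split; apply: madd_compat.
- by move=> x x' [? ?]; split; apply: mopp_compat.
- by move=> x x' r [? ?]; split; apply: mact_compat.
- by move=> x y z; split; apply: maddA.
- by move=> x y; split; apply: maddC.
- by move=> x; split; apply: madd0.
- by move=> x; split; apply: maddN.
- by move=> x y r; split; apply: mactDl.
- by move=> x r s; split; apply: mactDr.
- by move=> x r s; split; apply: mactM.
- by move=> x; split; apply: mact1.
Defined.

Definition mpow (R : pzRingType) (B : rmod R) (m : nat) : rmod R.
Proof.
refine (@RMod R ('I_m -> B)
  (fun f g => forall i, meq (f i) (g i))
  (fun _ => mzero)
  (fun f g i => madd (f i) (g i))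
  (fun f i => mopp (f i))
  (fun f r i => mact (f i) r) _ _ _ _ _ _ _ _ _ _ _ _ _ _).
- by move=> x i; apply: meq_refl.
- by move=> x y H i; apply: meq_sym.
- by move=> x y z H1 H2 i; apply: meq_trans (H1 i) (H2 i).
- by move=> x x' y y' H1 H2 i; apply: madd_compat.
- by move=> x x' H i; apply: mopp_compat.
- by move=> x x' r H i; apply: mact_compat.
- by move=> x y z i; apply: maddA.
- by move=> x y i; apply: maddC.
- by move=> x i; apply: madd0.
- by move=> x i; apply: maddN.
- by move=> x y r i; apply: mactDl.
- by move=> x r s i; apply: mactDr.
- by move=> x r s i; apply: mactM.
- by move=> x i; apply: mact1.
Defined.

Definition RR (R : pzRingType) : rmod R.
Proof.
refine (@RMod R R (fun x y => x = y) 0 +%R -%R *%R _ _ _ _ _ _ _ _ _ _ _ _ _ _).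
all: try by move=> *; subst.
- by move=> x y z; apply: addrA.
- by move=> x y; apply: addrC.
- by move=> x; apply: addr0.
- by move=> x; apply: subrr.
- by move=> x y r; apply: mulrDl.
- by move=> x r s; apply: mulrDr.
- by move=> x r s; apply: mulrA.
- by move=> x; apply: mulr1.
Defined.

Record rideal (R : pzRingType) := RIdeal {
  rid :> R -> Prop;
  rid0 : rid 0;
  ridD : forall x y, rid x -> rid y -> rid (x + y);
  ridN : forall x, rid x -> rid (- x);
  ridM : forall x r, rid x -> rid (x * r) }.

Definition ideal_mod (R : pzRingType) (I : rideal R) : rmod R.
Proof.
refine (@RMod R {x : R | I x} (fun u v => sval u = sval v)
  (exist _ 0 (rid0 I))
  (fun u v => exist _ (sval u + sval v) (ridD (proj2_sig u) (proj2_sig v)))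
  (fun u => exist _ (- sval u) (ridN (proj2_sig u)))
  (fun u r => exist _ (sval u * r) (ridM r (proj2_sig u))) _ _ _ _ _ _ _ _ _ _ _ _ _ _).
all: rewrite /=.
- by [].
- by move=> x y ->.
- by move=> x y z -> ->.
- by move=> x x' y y' /= -> ->.
- by move=> x x' /= ->.
- by move=> x x' r /= ->.
- by move=> [x ?] [y ?] [z ?] /=; rewrite addrA.
- by move=> [x ?] [y ?] /=; rewrite addrC.
- by move=> [x ?] /=; rewrite addr0.
- by move=> [x ?] /=; rewrite subrr.
- by move=> [x ?] [y ?] r /=; rewrite mulrDl.
- by move=> [x ?] r s /=; rewrite mulrDr.
- by move=> [x ?] r s /=; rewrite mulrA.
- by move=> [x ?] /=; rewrite mulr1.
Defined.

Definition quot_mod (R : pzRingType) (I : rideal R) : rmod R.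
Proof.
refine (@RMod R R (fun x y => I (x - y)) 0 +%R -%R *%R _ _ _ _ _ _ _ _ _ _ _ _ _ _).
- by move=> x; rewrite subrr; apply: rid0.
- by move=> x y H; rewrite -opprB; apply: ridN.
- by move=> x y z H1 H2; have := ridD H1 H2; rewrite addrA subrK.
- move=> x x' y y' H1 H2; have := ridD H1 H2.
  by rewrite opprD addrACA.
- by move=> x x' H; rewrite -opprD; apply: ridN.
- by move=> x x' r H; rewrite -mulrBl; apply: ridM.
- by move=> x y z; rewrite addrA subrr; apply: rid0.
- by move=> x y; rewrite (addrC x) subrr; apply: rid0.
- by move=> x; rewrite addr0 subrr; apply: rid0.
- by move=> x; rewrite subrr subrr; apply: rid0.
- by move=> x y r; rewrite mulrDl subrr; apply: rid0.
- by move=> x r s; rewrite mulrDr subrr; apply: rid0.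
- by move=> x r s; rewrite mulrA subrr; apply: rid0.
- by move=> x; rewrite mulr1 subrr; apply: rid0.
Defined.

Definition princ (R : pzRingType) (x : R) : rideal R.
Proof.
refine (@RIdeal R (fun y => exists t, y = x * t) _ _ _ _).
- by exists 0; rewrite mulr0.
- by move=> y z [t ->] [s ->]; exists (t + s); rewrite mulrDr.
- by move=> y [t ->]; exists (- t); rewrite mulrN.
- by move=> y r [t ->]; exists (t * r); rewrite mulrA.
Defined.

Definition rann (R : pzRingType) (a : R) : rideal R.
Proof.
refine (@RIdeal R (fun y => a * y = 0) _ _ _ _).
- by rewrite mulr0.
- by move=> y z Hy Hz; rewrite mulrDr Hy Hz addr0.
- by move=> y Hy; rewrite mulrN Hy oppr0.
- by move=> y r Hy; rewrite mulrA Hy mul0r.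
Defined.

Definition propto (R : pzRingType) (A B : rmod R) : Prop :=
  exists m : nat, (0 < m)%N /\ exists C : rmod R, miso (dsum A C) (mpow B m).

Definition fgproj (R : pzRingType) (A : rmod R) : Prop :=
  exists (n : nat) (C : rmod R), miso (dsum A C) (mpow (RR R) n).

Definition separative (R : pzRingType) : Prop :=
  forall A B : rmod R, fgproj A -> fgproj B ->
    miso (dsum A A) (dsum A B) -> miso (dsum A B) (dsum B B) -> miso A B.

Definition exchange_ring (R : pzRingType) : Prop :=
  forall x : R, exists e : R,
    [/\ e * e = e, (exists r, e = x * r) & (exists s, 1 - e = (1 - x) * s)].

Definition regular (R : pzRingType) (x : R) : Prop := exists y, x = x * y * x.

Definition unit_regular (R : unitRingType) (x : R) : Prop :=
  exists u, u \is a GRing.unit /\ x = x * u * x.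

(* Main.v *)
Require Import Defs.
From HB Require Import structures.
From mathcomp Require Import all_boot all_algebra.
From Stdlib Require Import Setoid Morphisms.
Import GRing.Theory.
Set Implicit Arguments. Unset Strict Implicit.
Local Open Scope ring_scope.
Lemma is_hom_id (R : pzRingType) (A : rmod R) : is_hom (fun x : A => x).
Proof. by split=> *; [ | apply: meq_refl | apply: meq_refl]. Qed.

Lemma is_hom_comp (R : pzRingType) (A B C : rmod R) (f : A -> B) (g : B -> C) :
  is_hom f -> is_hom g -> is_hom (fun x => g (f x)).
Proof.
move=> [f1 f2 f3] [g1 g2 g3]; split.
- by move=> x y H; apply: g1; apply: f1.
- by move=> x y; apply: meq_trans (g2 _ _); apply: g1.
- by move=> x r; apply: meq_trans (g3 _ _); apply: g1.
Qed.

Lemma miso_refl (R : pzRingType) (A : rmod R) : miso A A.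
Proof. exists id, id; split; try apply: is_hom_id; move=> x; apply: meq_refl. Qed.

Lemma miso_sym (R : pzRingType) (A B : rmod R) : miso A B -> miso B A.
Proof. by move=> [f [g [h1 h2 h3 h4]]]; exists g, f; split. Qed.

Lemma miso_trans (R : pzRingType) (A B C : rmod R) : miso A B -> miso B C -> miso A C.
Proof.
move=> [f [g [h1 h2 h3 h4]]] [f' [g' [h1' h2' h3' h4']]].
exists (fun x => f' (f x)), (fun x => g (g' x)); split.
- exact: is_hom_comp.
- exact: is_hom_comp.
- move=> x; apply: meq_trans (h3 x); case: h2 => c _ _; apply: c; exact: h3'.
- move=> x; apply: meq_trans (h4' x); case: h1' => c _ _; apply: c; exact: h4.
Qed.

Add Parametric Relation (R : pzRingType) : (rmod R) (@miso R)
  reflexivity proved by (@miso_refl R)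
  symmetry proved by (@miso_sym R)
  transitivity proved by (@miso_trans R) as miso_rel.

Lemma is_hom_pair (R : pzRingType) (A B A' B' : rmod R) (f : A -> A') (g : B -> B') :
  is_hom f -> is_hom g -> is_hom (fun p : dsum A B => (f p.1, g p.2) : dsum A' B').
Proof.
move=> [f1 f2 f3] [g1 g2 g3]; split.
- by move=> x y [H1 H2]; split; [apply: f1 | apply: g1].
- by move=> x y; split; [apply: f2 | apply: g2].
- by move=> x r; split; [apply: f3 | apply: g3].
Qed.

Lemma dsum_congr (R : pzRingType) (A A' B B' : rmod R) :
  miso A A' -> miso B B' -> miso (dsum A B) (dsum A' B').
Proof.
move=> [f [g [h1 h2 h3 h4]]] [f' [g' [h1' h2' h3' h4']]].
exists (fun p : dsum A B => (f p.1, f' p.2) : dsum A' B').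
exists (fun p : dsum A' B' => (g p.1, g' p.2) : dsum A B); split.
- exact: is_hom_pair.
- exact: is_hom_pair.
- by move=> x; split; [apply: h3 | apply: h3'].
- by move=> x; split; [apply: h4 | apply: h4'].
Qed.

Add Parametric Morphism (R : pzRingType) : (@dsum R)
  with signature (@miso R) ==> (@miso R) ==> (@miso R) as dsum_mor.
Proof. move=> *; exact: dsum_congr. Qed.

Lemma dsumC (R : pzRingType) (A B : rmod R) : miso (dsum A B) (dsum B A).
Proof.
exists (fun p : dsum A B => (p.2, p.1) : dsum B A).
exists (fun p : dsum B A => (p.2, p.1) : dsum A B); split.
- by split=> [x y [? ?]|x y|x r]; split=> //=; apply: meq_refl.
- by split=> [x y [? ?]|x y|x r]; split=> //=; apply: meq_refl.
- by move=> x; split; apply: meq_refl.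
- by move=> x; split; apply: meq_refl.
Qed.

Lemma dsumA (R : pzRingType) (A B C : rmod R) :
  miso (dsum A (dsum B C)) (dsum (dsum A B) C).
Proof.
exists (fun p : dsum A (dsum B C) => ((p.1, p.2.1), p.2.2) : dsum (dsum A B) C).
exists (fun p : dsum (dsum A B) C => (p.1.1, (p.1.2, p.2)) : dsum A (dsum B C)); split.
- by split=> [x y [? [? ?]]|x y|x r]; (repeat split) => //=; apply: meq_refl.
- by split=> [x y [[? ?] ?]|x y|x r]; (repeat split) => //=; apply: meq_refl.
- by move=> x; (repeat split); apply: meq_refl.
- by move=> x; (repeat split); apply: meq_refl.
Qed.


Lemma dsum0 (R : pzRingType) (A B : rmod R) : miso (dsum A (mpow B 0)) A.
Proof.
exists (fun p : dsum A (mpow B 0) => p.1).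
exists (fun x : A => (x, fun _ => mzero) : dsum A (mpow B 0)); split.
- by split=> [x y [? ?]|x y|x r] //=; apply: meq_refl.
- split=> [x y ?|x y|x r]; split=> //=; try apply: meq_refl; by case.
- by move=> x; split; [apply: meq_refl | case].
- by move=> x; apply: meq_refl.
Qed.

Lemma mpow_add (R : pzRingType) (A : rmod R) m n :
  miso (mpow A (m + n)) (dsum (mpow A m) (mpow A n)).
Proof.
exists (fun g : mpow A (m + n) =>
  ((fun i : 'I_m => g (lshift n i)), (fun j : 'I_n => g (rshift m j))) : dsum (mpow A m) (mpow A n)).
exists (fun p : dsum (mpow A m) (mpow A n) =>
  (fun k : 'I_(m + n) => match split k with inl i => p.1 i | inr j => p.2 j end) : mpow A (m + n)); split.
- split=> [x y H|x y|x r]; split=> /= i; try apply: meq_refl; exact: H.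
- split=> [x y [H1 H2]|x y|x r] /= k; case: (split k) => i //=; try apply: meq_refl;
    by [apply: H1 | apply: H2].
- move=> x k /=; case E: (split k) => [i|j]; have := splitK k; rewrite E /= => <-; apply: meq_refl.
- move=> x; split=> /= i.
  + by rewrite (unsplitK (inl _ i)); apply: meq_refl.
  + by rewrite (unsplitK (inr _ i)); apply: meq_refl.
Qed.

Lemma mpow1 (R : pzRingType) (A : rmod R) : miso (mpow A 1) A.
Proof.
exists (fun g : mpow A 1 => g ord0).
exists (fun x : A => (fun _ => x) : mpow A 1); split.
- by split=> [x y H|x y|x r] //=; apply: meq_refl.
- by split=> [x y H|x y|x r] /= i //; apply: meq_refl.
- by move=> x i /=; rewrite (ord1 i); apply: meq_refl.
- by move=> x; apply: meq_refl.
Qed.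

Lemma mpowS (R : pzRingType) (A : rmod R) n :
  miso (mpow A n.+1) (dsum A (mpow A n)).
Proof. have H := mpow_add A 1 n. rewrite mpow1 in H. exact: H. Qed.

Definition le (R : pzRingType) (X Y : rmod R) := exists V, miso Y (dsum X V).

Lemma le_refl (R : pzRingType) (X : rmod R) : le X X.
Proof. by exists (mpow X 0); symmetry; apply: dsum0. Qed.

Lemma le_trans (R : pzRingType) (X Y Z : rmod R) : le X Y -> le Y Z -> le X Z.
Proof. by move=> [V HV] [W HW]; exists (dsum V W); rewrite HW HV dsumA; reflexivity. Qed.

Lemma le_dsuml (R : pzRingType) (X V : rmod R) : le X (dsum X V).
Proof. exists V; reflexivity. Qed.

Lemma le_dsumr (R : pzRingType) (X V : rmod R) : le X (dsum V X).
Proof. by exists V; apply: dsumC. Qed.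

Lemma le_iso (R : pzRingType) (X Y Y' : rmod R) : miso Y Y' -> le X Y -> le X Y'.
Proof. by move=> H [V HV]; exists V; rewrite -H. Qed.

Lemma le_mpow (R : pzRingType) (A : rmod R) n : le A (mpow A n.+1).
Proof. by exists (mpow A n); apply: mpowS. Qed.

Lemma fgproj_iso (R : pzRingType) (A B : rmod R) : miso A B -> fgproj A -> fgproj B.
Proof. by move=> H [n [C HC]]; exists n, C; rewrite -H. Qed.

Lemma fgproj_dsum (R : pzRingType) (A B : rmod R) : fgproj A -> fgproj B -> fgproj (dsum A B).
Proof.
move=> [n [C HC]] [m [D HD]]; exists (n + m)%N, (dsum C D).
rewrite mpow_add -HC -HD !dsumA; apply: dsum_congr; last reflexivity.
rewrite -!dsumA (dsumC B C); reflexivity.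
Qed.

Lemma fgproj_mpow (R : pzRingType) (A : rmod R) n : fgproj A -> fgproj (mpow A n).
Proof.
move=> HA; elim: n => [|n IH].
- by exists 0%N, (mpow (RR R) 0); rewrite dsumC dsum0; reflexivity.
- apply: fgproj_iso (miso_sym (mpowS A n)) _; exact: fgproj_dsum.
Qed.

Lemma cancel1 (R : pzRingType) (X Y C : rmod R) : separative R ->
  fgproj X -> fgproj Y -> miso (dsum X C) (dsum Y C) -> le C X -> le C Y -> miso X Y.
Proof.
move=> Hs PX PY H [X' HX] [Y' HY].
have E1 : miso (dsum X X) (dsum X Y).
  apply: miso_trans (dsum_congr (miso_refl X) HX) _.
  rewrite dsumA H -dsumA -HX; exact: dsumC.
have E2 : miso (dsum Y Y) (dsum X Y).
  apply: miso_trans (dsum_congr (miso_refl Y) HY) _.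
  rewrite dsumA -H -dsumA -HY; reflexivity.
exact: (Hs X Y PX PY E1 (miso_sym E2)).
Qed.

Lemma down (R : pzRingType) (A B : rmod R) : separative R -> fgproj A -> fgproj B ->
  forall j, miso (dsum A (mpow A j.+1)) (dsum B (mpow A j.+1)) -> miso (dsum A A) (dsum B A).
Proof.
move=> Hs PA PB; elim=> [|j IH] H.
- by rewrite mpow1 in H.
- apply: IH; apply: (@cancel1 _ _ _ A Hs).
  + apply: fgproj_dsum => //; exact: fgproj_mpow.
  + apply: fgproj_dsum => //; exact: fgproj_mpow.
  + rewrite -!dsumA (dsumC (mpow A j.+1) A) -mpowS; exact: H.
  + exact: le_dsuml.
  + apply: le_trans (le_mpow A j) (le_dsumr _ _).
Qed.

Lemma cancel_prop (R : pzRingType) (A B C : rmod R) : separative R ->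
  fgproj A -> fgproj B -> miso (dsum C A) (dsum C B) -> propto C A -> propto C B -> miso A B.
Proof.
move=> Hs PA PB H [m [Hm [D HD]]] [m' [Hm' [D' HD']]].
have H1 : forall X Y (n : nat) E, miso (dsum C E) (mpow X n) -> miso (dsum C X) (dsum C Y) ->
   (0 < n)%N -> miso (dsum X (mpow X n)) (dsum Y (mpow X n)).
  move=> X Y n E HE HXY _.
  rewrite -HE !dsumA (dsumC X C) HXY (dsumC C Y); reflexivity.
case: m Hm HD => // m _ HD; case: m' Hm' HD' => // m' _ HD'.
have E1 := down Hs PA PB (H1 _ _ _ _ HD H isT).
have E2 := down Hs PB PA (H1 _ _ _ _ HD' (miso_sym H) isT).
apply: Hs => //.
- rewrite E1 dsumC; reflexivity.
- by symmetry.
Qed.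
Lemma lA2 (R : pzRingType) (u v r : R) : u * v = r -> forall X, X * u * v = X * r.
Proof. by move=> H X; rewrite -mulrA H. Qed.
Lemma lA3 (R : pzRingType) (u v w r : R) : u * v * w = r -> forall X, X * u * v * w = X * r.
Proof. by move=> H X; rewrite -(mulrA (X*u)) -(mulrA X) (mulrA u v w) H. Qed.

Ltac nrm := rewrite ?(mulrDr, mulrDl, mulrBr, mulrBl, mul1r, mulr1, mulrA, mulr0, mul0r, mulrN, mulNr).

Lemma r2 (R : pzRingType) (a p b y t : R) : a * p = b -> b * y * b = b ->
  a * (p * t - p * y * (a * (p * t))) = 0.
Proof. move=> H1 H4; nrm; rewrite !H1 (lA2 H1) H4 subrr //. Qed.

Lemma pk (R : pzRingType) (a p k : R) : a * a + p = 1 -> a * k = 0 -> p * k = k.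
Proof.
move=> H3 Hk; have -> : p = 1 - a * a by rewrite -H3 addrAC subrr add0r.
by rewrite mulrBl mul1r -mulrA Hk mulr0 subr0.
Qed.

Lemma r4 (R : pzRingType) (a p b y t k : R) : a * p = b -> b * y * b = b -> a * k = 0 ->
  a * (p * y * (b * t) + k) = b * t.
Proof. move=> H1 H4 Hk; nrm; by rewrite H1 H4 Hk addr0. Qed.

Lemma r6 (R : pzRingType) (p a b y t : R) : p * a = b -> b * y * b = b ->
  (1 - b * y) * (p * (a * t)) = 0.
Proof. move=> H2 H4; nrm; by rewrite H2 (lA2 H2) H4 subrr. Qed.

Lemma r5 (R : pzRingType) (p a b y t r : R) : p * a = b ->
  b * t + (1 - b * y) * (p * r) = p * (a * t + r - a * y * (p * r)).
Proof. move=> H2; nrm; by rewrite !H2 addrA. Qed.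

Lemma r7 (R : pzRingType) (b y t p r : R) : b * y * b = b ->
  b * y * (b * t + (1 - b * y) * (p * r)) = b * t.
Proof. move=> H4; nrm; by rewrite !H4 subrr addr0. Qed.

Lemma r8 (R : pzRingType) (a p b y t r : R) : a * p = b -> a * a + p = 1 ->
  (b * t + (1 - b * y) * (p * r)) - r = a * (p * t - a * r - p * y * (p * r)).
Proof.
move=> H1 H3; nrm; rewrite !H1.
have Hp : p = 1 - a * a by rewrite -H3 addrAC subrr add0r.
have -> : p * r = r - a * a * r by rewrite Hp mulrBl mul1r.
by rewrite addrAC -addrA (addrA (-r)) addKr addrA.
Qed.

Lemma ab (R : pzRingType) (a p b : R) : a * p = b -> p * a = b -> a * b = b * a.
Proof. by move=> H1 H2; rewrite -{1}H2 mulrA H1. Qed.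

Lemma r9 (R : pzRingType) (a p b y t : R) : a * p = b -> p * a = b -> a * a + p = 1 -> b * y * b = b ->
  b * y * (p * t) + (1 - b * y) * (p * (p * t)) = p * t.
Proof.
move=> H1 H2 H3 H4.
have Hp : p = 1 - a * a by rewrite -H3 addrAC subrr add0r.
have Hpx : p * (p * t) = p * t - b * (a * t).
  have E : a * (a * (p * t)) = b * (a * t) by rewrite (mulrA a p) H1 mulrA (ab H1 H2) -mulrA.
  by rewrite -E {1}Hp mulrBl mul1r -mulrA.
rewrite Hpx mulrBr (_ : (1 - b * y) * (b * (a * t)) = 0); last by nrm; rewrite H4 subrr.
by rewrite subr0 mulrBl mul1r addrC subrK.
Qed.

Lemma r10 (R : pzRingType) (a z t : R) : a * z * a = a -> (1 - a * z) * (a * t) = 0.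
Proof. by move=> H; rewrite mulrBl mul1r mulrA H subrr. Qed.

Lemma r11 (R : pzRingType) (a z r t : R) :
  ((1 - a * z) * r + a * t) - r = a * (t - z * r).
Proof.
by rewrite mulrBl mul1r mulrBr mulrA addrAC (addrAC r) subrr add0r addrC.
Qed.

Lemma r12 (R : pzRingType) (a z r t : R) : a * z * a = a ->
  a * z * ((1 - a * z) * r + a * t) = a * t.
Proof. move=> H; nrm; by rewrite !H subrr add0r. Qed.

Lemma r13 (R : pzRingType) (e x : R) : (1 - e) * x + e * x = x.
Proof. by rewrite mulrBl mul1r subrK. Qed.

Lemma r14 (R : pzRingType) (a z x : R) : a * z * a = a -> a * ((1 - z * a) * x) = 0.
Proof. move=> H; nrm; by rewrite H subrr. Qed.

Lemma r15 (R : pzRingType) (a z k t : R) : a * z * a = a -> a * k = 0 ->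
  (1 - z * a) * (k + z * a * t) = k.
Proof.
move=> H Hk; rewrite mulrBl mul1r mulrDr -(mulrA z a k) Hk mulr0 add0r !mulrA (lA3 H).
by rewrite addrK.
Qed.

Lemma r16 (R : pzRingType) (a z k t : R) : a * z * a = a -> a * k = 0 ->
  z * a * (k + z * a * t) = z * a * t.
Proof.
move=> H Hk; rewrite mulrDr -(mulrA z a k) Hk mulr0 add0r !mulrA (lA3 H) //.
Qed.


Lemma final_ring (R : unitRingType) (a z s t w : R) : a * z * a = a ->
  a * s = 0 -> s * a = 0 -> t * s = 1 + a * w -> s * t * (1 - z * a) = 1 - z * a ->
  unit_regular a.
Proof.
move=> H Hs1 Hs2 Hts Hst.
set u := z * a * z + s; set v := a + (1 - a * z) * t * (1 - z * a).
have E1 : z * a * z * (1 - a * z) = 0 by rewrite mulrBr mulr1 !mulrA (lA3 H) subrr.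
have E2 : s * (1 - a * z) = s by rewrite mulrBr mulr1 mulrA Hs2 mul0r subr0.
have E3 : (1 - z * a) * (z * a * z) = 0 by rewrite mulrBl mul1r !mulrA (lA3 H) subrr.
have E4 : (1 - z * a) * s = s by rewrite mulrBl mul1r -mulrA Hs1 mulr0 subr0.
have E5 : (1 - a * z) * (t * s) = 1 - a * z by rewrite Hts mulrDr mulr1 r10 // addr0.
have Huv : u * v = 1.
  rewrite /u /v mulrDl (mulrDr (z * a * z)) (mulrDr s) !mulrA E1 !mul0r addr0 (lA3 H) Hs2 add0r E2.
  by rewrite Hst addrC subrK.
have Hvu : v * u = 1.
  rewrite /u /v mulrDl (mulrDr a) mulrDr Hs1 addr0 !mulrA H.
  have E3' : forall Y, Y * (1 - z * a) * z * a * z = 0 by move=> Y; rewrite -(mulr0 Y) -E3 !mulrA.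
  rewrite E3' add0r -(mulrA _ (1 - z * a) s) E4 -mulrA E5.
  by rewrite addrC subrK.
exists u; split; first by apply/unitrP; exists v.
by rewrite /u mulrDr mulrDl Hs1 mul0r addr0 !mulrA !(lA3 H) H.
Qed.
Lemma prf1 (R : pzRingType) (a p b x : R) : a * p = b ->
  (exists t, x = p * t) -> exists t, a * x = b * t.
Proof. by move=> H1 [t ->]; exists t; rewrite mulrA H1. Qed.

Lemma prf2 (R : pzRingType) (a p b y x : R) : a * p = b -> b * y * b = b ->
  (exists t, x = p * t) -> a * (x - p * y * (a * x)) = 0.
Proof. by move=> H1 H4 [t ->]; exact: (r2 t H1 H4). Qed.

Lemma prf3 (R : pzRingType) (a p y w k : R) : a * a + p = 1 ->
  a * k = 0 -> exists t, p * y * w + k = p * t.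
Proof. by move=> H3 Hk; exists (y * w + k); rewrite mulrDr mulrA (pk H3 Hk). Qed.

Lemma iso_PK (R : pzRingType) (a p b y : R) : a * p = b -> a * a + p = 1 -> b * y * b = b ->
  miso (ideal_mod (princ p)) (dsum (ideal_mod (princ b)) (ideal_mod (rann a))).
Proof.
move=> H1 H3 H4.
pose f (x : ideal_mod (princ p)) : dsum (ideal_mod (princ b)) (ideal_mod (rann a)) :=
  (exist _ (a * sval x) (prf1 H1 (proj2_sig x)),
   exist _ (sval x - p * y * (a * sval x)) (prf2 H1 H4 (proj2_sig x))).
pose g (q : dsum (ideal_mod (princ b)) (ideal_mod (rann a))) : ideal_mod (princ p) :=
  exist _ (p * y * sval q.1 + sval q.2) (prf3 y (sval q.1) H3 (proj2_sig q.2)).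
exists f, g; split.
- split=> [x x' /= ->|x x'|x r]; split=> //=.
  + by rewrite mulrDr.
  + by rewrite !mulrDr opprD addrACA.
  + by rewrite mulrA.
  + by rewrite mulrBl !mulrA.
- split=> [[x1 x2] [x1' x2'] [/= -> ->]|x x'|x r] //=.
  + by rewrite mulrDr addrACA.
  + by rewrite mulrDl mulrA.
- by move=> x /=; rewrite addrC subrK.
- move=> [[w [t Hw]] [k Hk]] /=; split=> /=.
  + by rewrite Hw; apply: r4.
  + by rewrite Hw r4 // (addrC _ k) addrK.
Qed.

Lemma prf4 (R : pzRingType) (p a b y w r : R) : p * a = b ->
  (exists t, w = b * t) -> exists t, w + (1 - b * y) * (p * r) = p * t.
Proof. by move=> H2 [t ->]; exists (a * t + r - a * y * (p * r)); apply: r5. Qed.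

Lemma prf5 (R : pzRingType) (b y x : R) : exists t, b * y * x = b * t.
Proof. by exists (y * x); rewrite mulrA. Qed.

Lemma iso_PQ (R : pzRingType) (a p b y : R) : a * p = b -> p * a = b -> a * a + p = 1 -> b * y * b = b ->
  miso (ideal_mod (princ p)) (dsum (ideal_mod (princ b)) (quot_mod (princ a))).
Proof.
move=> H1 H2 H3 H4.
pose f (x : ideal_mod (princ p)) : dsum (ideal_mod (princ b)) (quot_mod (princ a)) :=
  (exist _ (b * y * sval x) (prf5 b y (sval x)), sval x).
pose g (q : dsum (ideal_mod (princ b)) (quot_mod (princ a))) : ideal_mod (princ p) :=
  exist _ (sval q.1 + (1 - b * y) * (p * q.2)) (prf4 y q.2 H2 (proj2_sig q.1)).
exists f, g; split.
- split=> [x x' /= ->|x x'|x r]; split=> //=; try by exists 0; rewrite subrr mulr0.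
  + by rewrite mulrDr.
  + by rewrite mulrA.
- split=> [[x1 x2] [x1' x2'] [/= -> [t Ht]]|x x'|x r] //=.
  + have -> : x2 = x2' + a * t by rewrite -Ht addrC subrK.
    by rewrite (mulrDr p) mulrDr r6 // addr0.
  + by rewrite (mulrDr p) mulrDr addrACA.
  + by rewrite [RHS]mulrDl -!mulrA.
- move=> [x [t Hx]] /=; rewrite Hx; exact: (r9 t H1 H2 H3 H4).
- move=> [[w [t Hw]] r] /=; split=> /=.
  + by rewrite Hw; apply: r7.
  + by eexists; rewrite Hw; apply: r8.
Qed.

Lemma fgproj_Q (R : pzRingType) (a z : R) : a * z * a = a -> fgproj (quot_mod (princ a)).
Proof.
move=> H; exists 1%N, (ideal_mod (princ a)); rewrite mpow1.
pose f (q : dsum (quot_mod (princ a)) (ideal_mod (princ a))) : RR R := (1 - a * z) * q.1 + sval q.2.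
have Pg : forall x : R, rid (princ a) (a * z * x) by move=> x; exists (z * x); rewrite mulrA.
pose g (x : RR R) : dsum (quot_mod (princ a)) (ideal_mod (princ a)) := (x, exist _ (a * z * x) (Pg x)).
exists f, g; split.
- split=> [[r [w ?]] [r' [w' ?]] [/= [t Ht] /= Hw]|x x'|x r]; rewrite /f /=.
  + have -> : r = r' + a * t by rewrite -Ht addrC subrK.
    by rewrite Hw mulrDr r10 // addr0.
  + by rewrite mulrDr addrACA.
  + by rewrite [RHS]mulrDl mulrA.
- split=> [x x' /= ->|x x'|x r]; split=> //=; try by exists 0; rewrite subrr mulr0.
  + by rewrite mulrDr.
  + by rewrite mulrA.
- move=> [r [w [t Ht]]]; subst w; rewrite /f /g; split=> /=.
  + by exists (t - z * r); rewrite r11.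
  + by rewrite r12.
- by move=> x; rewrite /f /g /= r13.
Qed.

Lemma fgproj_K (R : pzRingType) (a z : R) : a * z * a = a -> fgproj (ideal_mod (rann a)).
Proof.
move=> H; exists 1%N, (ideal_mod (princ (z * a))); rewrite mpow1.
pose f (q : dsum (ideal_mod (rann a)) (ideal_mod (princ (z * a)))) : RR R := sval q.1 + sval q.2.
have Pk : forall x : R, rid (rann a) ((1 - z * a) * x) by move=> x; apply: r14.
have Pw : forall x : R, rid (princ (z * a)) (z * a * x) by move=> x; exists x.
pose g (x : RR R) : dsum (ideal_mod (rann a)) (ideal_mod (princ (z * a))) :=
  (exist _ ((1 - z * a) * x) (Pk x), exist _ (z * a * x) (Pw x)).
exists f, g; split.
- split=> [[[k ?] [w ?]] [[k' ?] [w' ?]] [/= Hk Hw]|x x'|x r]; rewrite /f /=.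
  + by rewrite Hk Hw.
  + by rewrite addrACA.
  + by rewrite mulrDl.
- split=> [x x' /= ->|x x'|x r]; split=> //=.
  + by rewrite mulrDr.
  + by rewrite mulrDr.
  + by rewrite mulrA.
  + by rewrite mulrA.
- move=> [[k Hk] [w [t Ht]]]; subst w; rewrite /f /g; split=> /=.
  + by rewrite r15.
  + by rewrite r16.
- by move=> x; rewrite /f /g /= r13.
Qed.

Lemma iso_ur (R : unitRingType) (a z : R) : a * z * a = a ->
  miso (quot_mod (princ a)) (ideal_mod (rann a)) -> unit_regular a.
Proof.
move=> H [phi [psi [[pc pa pm] [qc qa qm] hpq hqp]]].
set s := sval (phi 1).
have F1 : forall r, sval (phi r) = s * r.
  move=> r; have := pm 1 r; rewrite /= mul1r => ->; by [].
have F2 : a * s = 0 by exact: (proj2_sig (phi 1)).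
have F3 : s * a = 0.
  rewrite -F1; have := pc a 0 (ex_intro _ 1 _); rewrite subr0 mulr1 => /(_ erefl) /= ->.
  by rewrite F1 mulr0.
have Pk1 : rid (rann a) (1 - z * a) by rewrite /= mulrBr mulr1 mulrA H subrr.
pose k1 : ideal_mod (rann a) := exist _ (1 - z * a) Pk1.
set t := psi k1.
have F4 : forall k : ideal_mod (rann a), exists w, psi k - t * sval k = a * w.
  move=> k.
  have E : meq k (mact k1 (sval k)).
    case: k => k Hk /=; rewrite mulrBl mul1r -mulrA.
    by move: Hk => /= ->; rewrite mulr0 subr0.
  have := meq_trans (qc _ _ E) (qm k1 (sval k)).
  by move=> /= [w Hw]; exists w.
have [w0 Hw0] : exists w, psi (phi 1) - 1 = a * w by exact: (hpq 1).
have [w1 Hw1] := F4 (phi 1).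
have Hts : t * s = 1 + a * (w0 - w1).
  rewrite mulrBr -Hw0 -Hw1 /s.
  by rewrite opprB addrA (addrC 1) subrK addrC subrK.
have Hst : s * t = 1 - z * a by rewrite -F1; exact: (hqp k1).
apply: (final_ring H F2 F3 Hts).
rewrite Hst mulrBr mulr1 mulrBl mul1r !mulrA (lA3 H).
by rewrite subrr subr0.
Qed.

Unset Implicit Arguments.
Theorem lemma2p4 (R : unitRingType) (a : R) :
  exchange_ring R -> separative R -> (2%:R : R) \is a GRing.unit ->
  regular (a - a ^+ 3) ->
  propto (ideal_mod (princ (a - a ^+ 3))) (ideal_mod (rann a)) ->
  propto (ideal_mod (princ (a - a ^+ 3))) (quot_mod (princ a)) ->
  unit_regular a.
Proof.
move=> _ Hsep _ [y Hy] HK HQ.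
have E3 : a ^+ 3 = a * a * a by rewrite !exprS expr0 mulr1 mulrA.
have H1 : a * (1 - a * a) = a - a ^+ 3 by rewrite mulrBr mulr1 E3 mulrA.
have H2 : (1 - a * a) * a = a - a ^+ 3 by rewrite mulrBl mul1r E3.
have H3 : a * a + (1 - a * a) = 1 by rewrite addrC subrK.
have H4 : (a - a ^+ 3) * y * (a - a ^+ 3) = a - a ^+ 3 by rewrite -Hy.
set b := a - a ^+ 3 in H1 H2 H4 HK HQ.
set p := 1 - a * a in H1 H2 H3.
have Haza : a * (p * y * p + a) * a = a.
  rewrite mulrDr mulrDl !mulrA H1 (lA2 H2) H4 -E3 /b.
  by rewrite subrK.
have E : miso (dsum (ideal_mod (princ b)) (quot_mod (princ a)))
              (dsum (ideal_mod (princ b)) (ideal_mod (rann a))).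
  exact: miso_trans (miso_sym (iso_PQ H1 H2 H3 H4)) (iso_PK H1 H3 H4).
have QK := cancel_prop Hsep (fgproj_Q Haza) (fgproj_K Haza) E HQ HK.
exact: iso_ur Haza QK.
Qed.
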